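(* Let $\mathbb{S}^2=\{\boldsymbol{x}\in\mathbb{R}^3:\boldsymbol{x}^\top\boldsymbol{x}=1\}$ and let $\{b_n:n\in\mathbb{N}_0\}$ be a sequence of nonnegative functions $b_n:\mathbb{S}^2\to[0,\infty)$ such that $\sum_{n=0}^\infty b_n(\boldsymbol{x})<\infty$ for every $\boldsymbol{x}\in\mathbb{S}^2$. Define $$C(\boldsymbol{x}_1,\boldsymbol{x}_2)=\sum_{n=0}^\infty \{b_n(\boldsymbol{x}_1)b_n(\boldsymbol{x}_2)\}^{1/2}P_n(\boldsymbol{x}_1^\top\boldsymbol{x}_2),\qquad \boldsymbol{x}_1,\boldsymbol{x}_2\in\mathbb{S}^2.$$ Then $C$ is semi positive definite: for every $k\in\mathbb{N}$, all $\boldsymbol{x}_1,\dots,\boldsymbol{x}_k\in\mathbb{S}^2$ and all $a_1,\dots,a_k\in\mathbb{R}$, $$\sum_{i=1}^k\sum_{j=1}^k a_ia_jC(\boldsymbol{x}_i,\boldsymbol{x}_j)\ge 0.$$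
   Context: $P_n$ denotes the Legendre polynomial of degree $n$ (normalized so that $P_n(1)=1$). *)

(* Defs.v *)
From Stdlib Require Import Reals Lra.
From Coquelicot Require Import Coquelicot.
Open Scope R_scope.

Definition R3 := (R * R * R)%type.
Definition dot3 (x y : R3) : R :=
  let '(x1, x2, x3) := x in let '(y1, y2, y3) := y in x1*y1 + x2*y2 + x3*y3.
Definition on_sphere (x : R3) : Prop := dot3 x x = 1.

(* Legendre polynomials via Bonnet's recurrence (normalized P_n(1) = 1):
   P_0 = 1, P_1 = t, (n+2) P_{n+2} = (2n+3) t P_{n+1} - (n+1) P_n. *)
Fixpoint legendre_pair (n : nat) (t : R) : R * R :=
  match n with
  | O => (1, t)
  | S m => let '(p, q) := legendre_pair m t in
           (q, ((2 * INR m + 3) * t * q - (INR m + 1) * p) / (INR m + 2))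
  end.
Definition legendre (n : nat) (t : R) : R := fst (legendre_pair n t).

Definition Ccov (b : nat -> R3 -> R) (x1 x2 : R3) : R :=
  Series (fun n => sqrt (b n x1 * b n x2) * legendre n (dot3 x1 x2)).

(* Main.v *)
Require Import Defs.
From Stdlib Require Import Reals Lra Lia Factorial.
From Coquelicot Require Import Coquelicot.
Open Scope R_scope.

Lemma leg0 t : legendre 0 t = 1.
Proof. reflexivity. Qed.
Lemma leg1 t : legendre 1 t = t.
Proof. reflexivity. Qed.
Lemma lp_fst_S n t : fst (legendre_pair (S n) t) = snd (legendre_pair n t).
Proof. simpl. destruct (legendre_pair n t); reflexivity. Qed.
Lemma legSS n t : (INR n + 2) * legendre (S (S n)) t =
  (2 * INR n + 3) * t * legendre (S n) t - (INR n + 1) * legendre n t.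
Proof.
  unfold legendre. rewrite lp_fst_S. simpl (legendre_pair (S n) t).
  destruct (legendre_pair n t) as [p q] eqn:E. simpl.
  assert (H: INR n + 2 <> 0) by (pose proof (pos_INR n); lra).
  field. exact H.
Qed.
Lemma leg_one n : legendre n 1 = 1.
Proof.
  assert (H: forall n, legendre n 1 = 1 /\ legendre (S n) 1 = 1).
  { induction n0 as [|n0 [H1 H2]]. split; reflexivity.
    split. exact H2. pose proof (legSS n0 1) as E. rewrite H1, H2 in E.
    pose proof (pos_INR n0). apply Rmult_eq_reg_l with (INR n0 + 2); lra. }
  apply H.
Qed.

(* Q s n m = d^m/ds^m P_n (s) *)
Fixpoint Qf (s : R) (n m : nat) {struct n} : R :=
  match n with
  | O => match m with O => 1 | S _ => 0 end
  | S n' => match m with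
            | O => legendre (S n') s
            | S m' => s * Qf s n' m + INR (n' + m' + 1) * Qf s n' m'
            end
  end.

Lemma Q0 s n : Qf s n 0 = legendre n s.
Proof. destruct n; reflexivity. Qed.

Lemma QD1 s n m : Qf s (S n) (S m) = s * Qf s n (S m) + INR (n + m + 1) * Qf s n m.
Proof. reflexivity. Qed.

Lemma Qvan s n : forall m, (n < m)%nat -> Qf s n m = 0.
Proof.
  induction n as [|n IH]; intros m Hm.
  - destruct m; [lia|reflexivity].
  - destruct m as [|m]; [lia|]. rewrite QD1, (IH (S m)), (IH m) by lia. ring.
Qed.

Lemma Bonnet s n : (INR (S n) + 1) * Qf s (S (S n)) 0 + INR (S n) * Qf s n 0
   = (2 * INR (S n) + 1) * s * Qf s (S n) 0.
Proof.
  rewrite !Q0. pose proof (legSS n s). rewrite S_INR. lra.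
Qed.

Definition D2 s n m := s * Qf s (S n) (S m) - Qf s n (S m) = (INR (S n) - INR m) * Qf s (S n) m.

Lemma R1_of_D2 s n m : (forall m, D2 s n m) ->
  (INR (S n) - INR m + 1) * Qf s (S (S n)) m + (INR (S n) + INR m) * Qf s n m
   = (2 * INR (S n) + 1) * s * Qf s (S n) m.
Proof.
  intros HD. destruct m as [|m].
  - pose proof (Bonnet s n). simpl INR at 2 4. lra.
  - specialize (HD m). unfold D2 in HD. rewrite QD1.
    assert (HD' : Qf s n (S m) = s * Qf s (S n) (S m) - (INR (S n) - INR m) * Qf s (S n) m) by lra.
    rewrite HD'. rewrite !plus_INR, !S_INR. simpl INR. ring.
Qed.

Lemma D2_all s n m : D2 s n m.
Proof.
  revert m. induction n as [|n IH]; intro m.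
  - unfold D2. destruct m as [|m].
    + rewrite QD1, Q0. simpl. unfold legendre; simpl. ring.
    + destruct m as [|m].
      * rewrite QD1. simpl. ring.
      * rewrite !(Qvan s 1) by lia. rewrite (Qvan s 0) by lia. ring.
  - unfold D2. pose proof (R1_of_D2 s n m IH) as R1.
    pose proof (IH m) as H. unfold D2 in H.
    rewrite (QD1 s (S n) m).
    assert (E1 : Qf s (S n) (S m) = s * Qf s n (S m) + INR (n + m + 1) * Qf s n m) by apply QD1.
    assert (E2 : s * Qf s (S (S n)) (S m) - Qf s (S n) (S m) =
       (2 * INR (S n) + 1) * s * Qf s (S n) m - INR (n + m + 1) * Qf s n m).
    { rewrite (QD1 s (S n) m).
      replace (s * (s * Qf s (S n) (S m) + INR (S n + m + 1) * Qf s (S n) m) - Qf s (S n) (S m))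
       with (s * (s * Qf s (S n) (S m)) + INR (S n + m + 1) * s * Qf s (S n) m - Qf s (S n) (S m)) by ring.
      assert (H' : s * Qf s (S n) (S m) = Qf s n (S m) + (INR (S n) - INR m) * Qf s (S n) m) by lra.
      rewrite H'. rewrite E1. rewrite !plus_INR, !S_INR. simpl INR. ring. }
    rewrite <- (QD1 s (S n) m). rewrite E2. rewrite <- R1.
    rewrite !plus_INR, !S_INR. simpl INR. ring.
Qed.

Lemma RR1 s n m :
  (INR (S n) - INR m + 1) * Qf s (S (S n)) m + (INR (S n) + INR m) * Qf s n m
   = (2 * INR (S n) + 1) * s * Qf s (S n) m.
Proof. apply R1_of_D2. intro; apply D2_all. Qed.

Lemma RR2 s n m :
  (2 * INR (S n) + 1) * Qf s (S n) m = Qf s (S (S n)) (S m) - Qf s n (S m).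
Proof.
  pose proof (D2_all s n m) as H. unfold D2 in H. rewrite (QD1 s (S n) m).
  rewrite ?plus_INR, ?S_INR in *. simpl INR in *. lra.
Qed.

Lemma RR3 s n m :
  (2 * INR (S n) + 1) * ((1 - s * s) * Qf s (S n) (S m)) =
  (INR (S n) + INR m) * (INR (S n) + INR m + 1) * Qf s n m
  - (INR (S n) - INR m) * (INR (S n) - INR m + 1) * Qf s (S (S n)) m.
Proof.
  pose proof (D2_all s n m) as H. unfold D2 in H.
  pose proof (RR1 s n m) as H1.
  assert (E : (1 - s * s) * Qf s (S n) (S m) = (INR (S n) + INR m) * Qf s n m - (INR (S n) - INR m) * (s * Qf s (S n) m)).
  { rewrite (QD1 s n m).
    replace ((1 - s * s) * (s * Qf s n (S m) + INR (n + m + 1) * Qf s n m))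
      with (s * Qf s n (S m) + INR (n + m + 1) * Qf s n m - s * (s * (s * Qf s n (S m) + INR (n + m + 1) * Qf s n m))) by ring.
    rewrite <- (QD1 s n m).
    assert (H' : s * Qf s (S n) (S m) = Qf s n (S m) + (INR (S n) - INR m) * Qf s (S n) m) by lra.
    rewrite H'. rewrite (QD1 s n m). rewrite ?plus_INR, ?S_INR. simpl INR. ring. }
  rewrite E.
  replace ((2 * INR (S n) + 1) * ((INR (S n) + INR m) * Qf s n m - (INR (S n) - INR m) * (s * Qf s (S n) m)))
    with ((2 * INR (S n) + 1) * (INR (S n) + INR m) * Qf s n m - (INR (S n) - INR m) * ((2 * INR (S n) + 1) * s * Qf s (S n) m)) by ring.
  rewrite <- H1. ring.
Qed.

Lemma alg_gen N m L lamp lm1 lp1 ln1 s t q1 q1' q0 q0' q2 q2' a a' b b' :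
  (2*N+1) * s * q1 = (N-m+1)*a + (N+m)*b ->
  (2*N+1) * t * q1' = (N-m+1)*a' + (N+m)*b' ->
  (2*N+1) * q0 = a - b -> (2*N+1) * q0' = a' - b' ->
  (2*N+1) * ((1-s*s)*q2) = (N+m)*(N+m+1)*b - (N-m)*(N-m+1)*a ->
  (2*N+1) * ((1-t*t)*q2') = (N+m)*(N+m+1)*b' - (N-m)*(N-m+1)*a' ->
  lamp * (N+1+m) = L * (N+1-m) -> lm1 = L * (N-m+1)*(N+m) ->
  lp1 * ((N-m)*(N+m+1)) = L -> ln1 * (N-m) = L*(N+m) ->
  N - m <> 0 -> 2*N+1 <> 0 -> N+1+m <> 0 -> N+m+1 <> 0 ->
  2*(N+1)*lamp*(a*a') = (2*N+1)*(2*s*t*L*(q1*q1') + lm1*(q0*q0') + (1-s*s)*(1-t*t)*lp1*(q2*q2')) - 2*N*ln1*(b*b').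
Proof.
  intros H1 H1' H0 H0' H2 H2' Hp Hm Hq Hn Z1 Z2 Z3 Z4.
  assert (E1 : s*q1 = ((N-m+1)*a + (N+m)*b)/(2*N+1)) by (apply Rmult_eq_reg_l with (2*N+1); [rewrite <- H1; field|]; auto).
  assert (E1' : t*q1' = ((N-m+1)*a' + (N+m)*b')/(2*N+1)) by (apply Rmult_eq_reg_l with (2*N+1); [rewrite <- H1'; field|]; auto).
  assert (E0 : q0 = (a-b)/(2*N+1)) by (apply Rmult_eq_reg_l with (2*N+1); [rewrite <- H0; field|]; auto).
  assert (E0' : q0' = (a'-b')/(2*N+1)) by (apply Rmult_eq_reg_l with (2*N+1); [rewrite <- H0'; field|]; auto).
  assert (E2 : (1-s*s)*q2 = ((N+m)*(N+m+1)*b - (N-m)*(N-m+1)*a)/(2*N+1)) by (apply Rmult_eq_reg_l with (2*N+1); [rewrite <- H2; field|]; auto).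
  assert (E2' : (1-t*t)*q2' = ((N+m)*(N+m+1)*b' - (N-m)*(N-m+1)*a')/(2*N+1)) by (apply Rmult_eq_reg_l with (2*N+1); [rewrite <- H2'; field|]; auto).
  assert (Ep : lamp = L * (N+1-m) / (N+1+m)) by (apply Rmult_eq_reg_r with (N+1+m); [rewrite Hp; field|]; auto).
  assert (Eq : lp1 = L / ((N-m)*(N+m+1))) by (apply Rmult_eq_reg_r with ((N-m)*(N+m+1)); [rewrite Hq; field; auto|]; apply Rmult_integral_contrapositive; auto).
  assert (En : ln1 = L*(N+m)/(N-m)) by (apply Rmult_eq_reg_r with (N-m); [rewrite Hn; field|]; auto).
  replace (2*s*t*L*(q1*q1')) with (2*L*(s*q1)*(t*q1')) by ring.
  replace ((1-s*s)*(1-t*t)*lp1*(q2*q2')) with (lp1*((1-s*s)*q2)*((1-t*t)*q2')) by ring.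
  rewrite E1, E1', E0, E0', E2, E2', Ep, Eq, En, Hm. field. auto.
Qed.

Lemma alg_mN N L lamp lm1 s t q1 q1' q0 q0' a a' :
  (2*N+1) * s * q1 = a -> (2*N+1) * t * q1' = a' ->
  (2*N+1) * q0 = a -> (2*N+1) * q0' = a' ->
  lamp * (2*N+1) = L -> lm1 = 2*N*L -> 2*N+1 <> 0 ->
  2*(N+1)*lamp*(a*a') = (2*N+1)*(2*s*t*L*(q1*q1') + lm1*(q0*q0')).
Proof.
  intros H1 H1' H0 H0' Hp Hm Z.
  assert (E1 : s*q1 = a/(2*N+1)) by (apply Rmult_eq_reg_l with (2*N+1); [rewrite <- H1; field|]; auto).
  assert (E1' : t*q1' = a'/(2*N+1)) by (apply Rmult_eq_reg_l with (2*N+1); [rewrite <- H1'; field|]; auto).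
  assert (E0 : q0 = a/(2*N+1)) by (apply Rmult_eq_reg_l with (2*N+1); [rewrite <- H0; field|]; auto).
  assert (E0' : q0' = a'/(2*N+1)) by (apply Rmult_eq_reg_l with (2*N+1); [rewrite <- H0'; field|]; auto).
  assert (Ep : lamp = L / (2*N+1)) by (apply Rmult_eq_reg_r with (2*N+1); [rewrite Hp; field|]; auto).
  replace (2*s*t*L*(q1*q1')) with (2*L*(s*q1)*(t*q1')) by ring.
  rewrite E1, E1', E0, E0', Ep, Hm. field. auto.
Qed.

Lemma alg_m0 N L s t q1 q1' q2 q2' a a' b b' :
  (2*N+1) * s * q1 = (N+1)*a + N*b -> (2*N+1) * t * q1' = (N+1)*a' + N*b' ->
  (2*N+1) * ((1-s*s)*q2) = N*(N+1)*b - N*(N+1)*a ->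
  (2*N+1) * ((1-t*t)*q2') = N*(N+1)*b' - N*(N+1)*a' ->
  L * (N*(N+1)) = 1 -> 2*N+1 <> 0 -> N <> 0 -> N+1 <> 0 ->
  (N+1)*(a*a') = (2*N+1)*(s*t*(q1*q1') + (1-s*s)*(1-t*t)*L*(q2*q2')) - N*(b*b').
Proof.
  intros H1 H1' H2 H2' HL Z1 Z2 Z3.
  assert (E1 : s*q1 = ((N+1)*a + N*b)/(2*N+1)) by (apply Rmult_eq_reg_l with (2*N+1); [rewrite <- H1; field|]; auto).
  assert (E1' : t*q1' = ((N+1)*a' + N*b')/(2*N+1)) by (apply Rmult_eq_reg_l with (2*N+1); [rewrite <- H1'; field|]; auto).
  assert (E2 : (1-s*s)*q2 = (N*(N+1)*b - N*(N+1)*a)/(2*N+1)) by (apply Rmult_eq_reg_l with (2*N+1); [rewrite <- H2; field|]; auto).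
  assert (E2' : (1-t*t)*q2' = (N*(N+1)*b' - N*(N+1)*a')/(2*N+1)) by (apply Rmult_eq_reg_l with (2*N+1); [rewrite <- H2'; field|]; auto).
  assert (EL : L = 1/(N*(N+1))) by (apply Rmult_eq_reg_r with (N*(N+1)); [rewrite HL; field; auto|]; apply Rmult_integral_contrapositive; auto).
  replace (s*t*(q1*q1')) with ((s*q1)*(t*q1')) by ring.
  replace ((1-s*s)*(1-t*t)*L*(q2*q2')) with (L*((1-s*s)*q2)*((1-t*t)*q2')) by ring.
  rewrite E1, E1', E2, E2', EL. field. auto.
Qed.

Definition lam (N m : nat) : R := INR (fact (N - m)%nat) / INR (fact (N + m)%nat).
Definition wgt (N m : nat) : R := match m with O => 1 | S _ => 2 * lam N m end.
Definition AA s t N m := Qf s N m * Qf t N m.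
Definition gam (pi : R) (c : nat -> R) (m : nat) : R :=
  match m with
  | O => pi * c 1%nat / 2
  | S O => c O + pi * c 2%nat / 2
  | S (S k) => c (S k) / 2 + pi * c (S (S (S k))) / 2
  end.

Lemma lam_eq N m a b : (N - m = a)%nat -> (N + m = b)%nat -> lam N m = INR (fact a) / INR (fact b).
Proof. intros H1 H2. unfold lam. rewrite H1, H2. reflexivity. Qed.
Lemma factS k : INR (fact (S k)) = INR (S k) * INR (fact k).
Proof. rewrite <- mult_INR. reflexivity. Qed.
Lemma lam_N0 N : lam N 0 = 1.
Proof. unfold lam. replace (N - 0)%nat with N by lia. replace (N + 0)%nat with N by lia. field. apply INR_fact_neq_0. Qed.

Lemma gam_S pi s t N m' :
  gam pi (fun k => wgt N k * AA s t N k) (S m') =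
  lam N m' * AA s t N m' + pi * lam N (S (S m')) * AA s t N (S (S m')).
Proof.
  destruct m' as [|m'].
  - simpl gam. unfold wgt. rewrite lam_N0. field.
  - simpl gam. unfold wgt. field.
Qed.

Ltac inrs := repeat (first [rewrite S_INR | rewrite plus_INR]).

Lemma lam_rel e m' N Nr mr : N = S (m' + S e) -> Nr = INR N -> mr = INR (S m') ->
  lam (S N) (S m') * (Nr+1+mr) = lam N (S m') * (Nr+1-mr) /\
  lam N m' = lam N (S m') * (Nr - mr + 1)*(Nr+mr) /\
  lam N (S (S m')) * ((Nr-mr)*(Nr+mr+1)) = lam N (S m') /\
  lam (m' + S e) (S m') * (Nr - mr) = lam N (S m') * (Nr+mr).
Proof.
  intros HN HNr Hmr. set (b0 := (S (m' + S e) + m')%nat).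
  assert (HE1 : Nr - mr = INR (S e)) by (subst; inrs; ring).
  assert (HE2 : Nr + mr = INR (S b0)) by (subst; unfold b0; inrs; ring).
  replace (Nr + 1 + mr) with (INR (S b0) + 1) by lra.
  replace (Nr + 1 - mr) with (INR (S e) + 1) by lra.
  replace (Nr - mr + 1) with (INR (S e) + 1) by lra.
  replace (Nr + mr + 1) with (INR (S b0) + 1) by lra.
  rewrite HE1, HE2.
  rewrite (lam_eq (S N) (S m') (S (S e)) (S (S b0))) by (subst; unfold b0; lia).
  rewrite (lam_eq N (S m') (S e) (S b0)) by (subst; unfold b0; lia).
  rewrite (lam_eq N m' (S (S e)) b0) by (subst; unfold b0; lia).
  rewrite (lam_eq N (S (S m')) e (S (S b0))) by (subst; unfold b0; lia).
  rewrite (lam_eq (m' + S e) (S m') e b0) by (subst; unfold b0; lia).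
  rewrite !factS. rewrite !(S_INR (S _)), !(S_INR e), !(S_INR b0).
  pose proof (INR_fact_neq_0 e). pose proof (INR_fact_neq_0 b0).
  pose proof (pos_INR e). pose proof (pos_INR b0).
  repeat split; field; repeat split; try lra; auto.
Qed.

Lemma lam_mN n : lam (S (S n)) (S n) * (2*INR (S n)+1) = lam (S n) (S n) /\
                 lam (S n) n = 2*INR (S n) * lam (S n) (S n).
Proof.
  set (K := (n+n)%nat).
  rewrite (lam_eq (S (S n)) (S n) 1 (S (S (S K)))) by (unfold K; lia).
  rewrite (lam_eq (S n) (S n) 0 (S (S K))) by (unfold K; lia).
  rewrite (lam_eq (S n) n 1 (S K)) by (unfold K; lia).
  rewrite !factS. assert (HK : INR K = 2 * INR n) by (unfold K; rewrite plus_INR; ring).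
  rewrite !(S_INR (S _)), !(S_INR K), (S_INR n), HK. simpl (INR 1). simpl (INR 0). simpl fact. simpl INR.
  pose proof (INR_fact_neq_0 K). pose proof (pos_INR n).
  split; field; repeat split; try lra; auto.
Qed.

Lemma lam_mN1 n : lam (S (S n)) (S (S n)) * ((2*INR (S n)+2)*(2*INR (S n)+1)) = lam (S n) (S n).
Proof.
  set (K := (n+n)%nat).
  rewrite (lam_eq (S (S n)) (S (S n)) 0 (S (S (S (S K))))) by (unfold K; lia).
  rewrite (lam_eq (S n) (S n) 0 (S (S K))) by (unfold K; lia).
  rewrite !factS. assert (HK : INR K = 2 * INR n) by (unfold K; rewrite plus_INR; ring).
  rewrite !(S_INR (S _)), !(S_INR K), (S_INR n), HK. simpl fact. simpl INR.
  pose proof (INR_fact_neq_0 K). pose proof (pos_INR n).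
  field; repeat split; try lra; auto.
Qed.

Lemma eq3 (x y x' y' : R) : x' = y' -> x = x' -> y = y' -> x = y.
Proof. intros; subst; auto. Qed.

Lemma INR_2N1 n : 2 * INR n + 1 <> 0.
Proof. pose proof (pos_INR n). lra. Qed.

Lemma PerM s t n m :
  let c := fun k => wgt (S n) k * AA s t (S n) k in
  let pi := (1 - s*s) * (1 - t*t) in
  INR (S (S n)) * (wgt (S (S n)) m * AA s t (S (S n)) m) =
  (2 * INR (S n) + 1) * (s * t * c m + gam pi c m) - INR (S n) * (wgt n m * AA s t n m).
Proof.
  intros c pi. unfold c. destruct m as [|m'].
  -
    simpl gam. unfold wgt, AA, pi.
    assert (HL : lam (S n) 1 * (INR (S n) * (INR (S n) + 1)) = 1).
    { rewrite (lam_eq _ _ n (S (S n))) by lia. rewrite (factS (S n)), (factS n).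
      rewrite !S_INR. field. split; [apply INR_fact_neq_0|]. pose proof (pos_INR n). lra. }
    pose proof (RR1 s n 0) as H1. pose proof (RR1 t n 0) as H1'.
    pose proof (RR3 s n 0) as H2. pose proof (RR3 t n 0) as H2'.
    simpl (INR 0) in *. rewrite ?Rminus_0_r, ?Rplus_0_r in *.
    pose proof (alg_m0 (INR (S n)) (lam (S n) 1) s t (Qf s (S n) 0) (Qf t (S n) 0)
      (Qf s (S n) 1) (Qf t (S n) 1) (Qf s (S (S n)) 0) (Qf t (S (S n)) 0) (Qf s n 0) (Qf t n 0)
      ltac:(lra) ltac:(lra) ltac:(lra) ltac:(lra) HL (INR_2N1 _)) as HH.
    rewrite (S_INR (S n)).
    refine (eq3 _ _ _ _ (HH _ _) _ _).
    + pose proof (pos_INR n). rewrite S_INR. lra.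
    + pose proof (pos_INR n). rewrite S_INR. lra.
    + ring.
    + field.
  - rewrite gam_S. unfold wgt, AA.
    pose proof (pos_INR n) as Pn. pose proof (pos_INR m') as Pm.
    destruct (Compare_dec.lt_eq_lt_dec m' n) as [[Hlt|Heq]|Hgt].
    + assert (exists e, n = (m' + S e)%nat) as [e He] by (exists (n - m' - 1)%nat; lia).
      destruct (lam_rel e m' (S n) (INR (S n)) (INR (S m')) ltac:(lia) eq_refl eq_refl) as [Lp [Lm [Lq Ln]]].
      rewrite <- He in Ln.
      pose proof (RR1 s n (S m')) as H1. pose proof (RR1 t n (S m')) as H1'.
      pose proof (RR2 s n m') as H0. pose proof (RR2 t n m') as H0'.
      pose proof (RR3 s n (S m')) as H2. pose proof (RR3 t n (S m')) as H2'.
      pose proof (alg_gen (INR (S n)) (INR (S m')) (lam (S n) (S m')) (lam (S (S n)) (S m')) (lam (S n) m') (lam (S n) (S (S m'))) (lam n (S m')) s t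
          (Qf s (S n) (S m')) (Qf t (S n) (S m')) (Qf s (S n) m') (Qf t (S n) m') (Qf s (S n) (S (S m'))) (Qf t (S n) (S (S m')))
          (Qf s (S (S n)) (S m')) (Qf t (S (S n)) (S m')) (Qf s n (S m')) (Qf t n (S m'))
          ltac:(lra) ltac:(lra) ltac:(lra) ltac:(lra) ltac:(lra) ltac:(lra) Lp Lm Lq Ln) as HH.
      assert (Hlt' : INR m' < INR n) by (apply lt_INR; exact Hlt).
      rewrite (S_INR (S n)).
      refine (eq3 _ _ _ _ (HH _ _ _ _) _ _); rewrite ?S_INR; try lra; unfold pi; ring.
    + subst m'.
      destruct (lam_mN n) as [Lp Lm].
      pose proof (RR1 s n (S n)) as H1. pose proof (RR1 t n (S n)) as H1'.
      pose proof (RR2 s n n) as H0. pose proof (RR2 t n n) as H0'.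
      rewrite !(Qvan _ n (S n)) in * by lia.
      rewrite !(Qvan _ (S n) (S (S n))) by lia.
      pose proof (alg_mN (INR (S n)) (lam (S n) (S n)) (lam (S (S n)) (S n)) (lam (S n) n) s t
          (Qf s (S n) (S n)) (Qf t (S n) (S n)) (Qf s (S n) n) (Qf t (S n) n)
          (Qf s (S (S n)) (S n)) (Qf t (S (S n)) (S n))
          ltac:(lra) ltac:(lra) ltac:(lra) ltac:(lra) Lp Lm (INR_2N1 _)) as HH.
      rewrite (S_INR (S n)).
      refine (eq3 _ _ _ _ HH _ _); ring.
    + destruct (Nat.eq_dec m' (S n)) as [Heq|Hne].
      * subst m'.
        pose proof (lam_mN1 n) as L1.
        pose proof (RR2 s n (S n)) as H0. pose proof (RR2 t n (S n)) as H0'.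
        rewrite !(Qvan _ n (S (S n))) in * by lia.
        rewrite !(Qvan _ (S n) (S (S n))) by lia.
        rewrite !(Qvan _ (S n) (S (S (S n)))) by lia.
        assert (Ea : Qf s (S (S n)) (S (S n)) = (2*INR (S n)+1) * Qf s (S n) (S n)) by lra.
        assert (Ea' : Qf t (S (S n)) (S (S n)) = (2*INR (S n)+1) * Qf t (S n) (S n)) by lra.
        rewrite Ea, Ea', <- L1, (S_INR (S n)). ring.
      * rewrite !(Qvan _ (S (S n)) (S m')) by lia.
        rewrite !(Qvan _ (S n) (S m')) by lia.
        rewrite !(Qvan _ (S n) m') by lia.
        rewrite !(Qvan _ (S n) (S (S m'))) by lia.
        rewrite !(Qvan _ n (S m')) by lia.
        ring.
Qed.

Fixpoint ssum (f : nat -> R) (K : nat) : R :=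
  match K with O => 0 | S K' => ssum f K' + f K' end.

Lemma ssum_ext f g K : (forall m, (m < K)%nat -> f m = g m) -> ssum f K = ssum g K.
Proof.
  induction K as [|K IH]; intro H; simpl. reflexivity.
  rewrite IH by (intros; apply H; lia). rewrite H by lia. reflexivity.
Qed.
Lemma ssum_plus f g K : ssum (fun m => f m + g m) K = ssum f K + ssum g K.
Proof. induction K as [|K IH]; simpl. ring. rewrite IH. ring. Qed.
Lemma ssum_scal a f K : ssum (fun m => a * f m) K = a * ssum f K.
Proof. induction K as [|K IH]; simpl. ring. rewrite IH. ring. Qed.
Lemma ssum_minus f g K : ssum f K - ssum g K = ssum (fun m => f m - g m) K.
Proof. induction K as [|K IH]; simpl. ring. rewrite <- IH. ring. Qed.
Lemma ssum_zero_ext f K d : (forall m, (K <= m)%nat -> f m = 0) -> ssum f (K + d) = ssum f K.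
Proof.
  intro H. induction d as [|d IH]. rewrite Nat.add_0_r. reflexivity.
  replace (K + S d)%nat with (S (K + d)) by lia. simpl. rewrite IH, H by lia. ring.
Qed.
Lemma ssum_nonneg f K : (forall m, (m < K)%nat -> 0 <= f m) -> 0 <= ssum f K.
Proof.
  induction K as [|K IH]; intro H; simpl. lra.
  pose proof (H K ltac:(lia)). pose proof (IH ltac:(intros; apply H; lia)). lra.
Qed.
Lemma dsum_sq a K : ssum (fun i => ssum (fun j => a i * a j) K) K = ssum a K * ssum a K.
Proof.
  rewrite <- ssum_scal. apply ssum_ext. intros i _.
  rewrite (ssum_scal (a i) a K). rewrite Rmult_comm.
  reflexivity.
Qed.

Lemma PSD_gen K M (c w : nat -> R) (u v : nat -> nat -> R) :
  (forall m, 0 <= w m) ->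
  0 <= ssum (fun i => ssum (fun j => c i * c j * ssum (fun m => w m * (u m i * u m j + v m i * v m j)) M) K) K.
Proof.
  intro Hw.
  assert (E : ssum (fun i => ssum (fun j => c i * c j * ssum (fun m => w m * (u m i * u m j + v m i * v m j)) M) K) K
     = ssum (fun m => w m * (ssum (fun i => c i * u m i) K * ssum (fun i => c i * u m i) K
                             + ssum (fun i => c i * v m i) K * ssum (fun i => c i * v m i) K)) M).
  { induction M as [|M IH].
    - simpl. transitivity (ssum (fun _ => 0) K).
      + apply ssum_ext. intros i _. transitivity (ssum (fun _ => 0) K).
        * apply ssum_ext. intros. ring.
        * clear. induction K; simpl; [ring| rewrite IHK; ring].
      + clear. induction K; simpl; [ring| rewrite IHK; ring].
    - simpl. rewrite <- IH.
      rewrite <- (dsum_sq (fun i => c i * u M i)), <- (dsum_sq (fun i => c i * v M i)).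
      rewrite <- ssum_plus. rewrite <- ssum_scal. rewrite <- ssum_plus.
      apply ssum_ext. intros i _.
      rewrite <- ssum_plus. rewrite <- ssum_scal. rewrite <- ssum_plus.
      apply ssum_ext. intros j _. ring. }
  rewrite E. apply ssum_nonneg. intros m _.
  apply Rmult_le_pos. apply Hw.
  apply Rplus_le_le_0_compat; apply Rle_0_sqr.
Qed.

Fixpoint CS (x1 x2 : R) (m : nat) : R * R :=
  match m with
  | O => (1, 0)
  | S k => let (c, s) := CS x1 x2 k in (x1 * c - x2 * s, x2 * c + x1 * s)
  end.
Definition Cf x1 x2 m := fst (CS x1 x2 m).
Definition Sf x1 x2 m := snd (CS x1 x2 m).
Lemma Cf_S x1 x2 k : Cf x1 x2 (S k) = x1 * Cf x1 x2 k - x2 * Sf x1 x2 k.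
Proof. unfold Cf, Sf. simpl. destruct (CS x1 x2 k). reflexivity. Qed.
Lemma Sf_S x1 x2 k : Sf x1 x2 (S k) = x2 * Cf x1 x2 k + x1 * Sf x1 x2 k.
Proof. unfold Cf, Sf. simpl. destruct (CS x1 x2 k). reflexivity. Qed.
Definition EE x1 x2 y1 y2 m := Cf x1 x2 m * Cf y1 y2 m + Sf x1 x2 m * Sf y1 y2 m.

Lemma EE_0 x1 x2 y1 y2 : EE x1 x2 y1 y2 0 = 1.
Proof. unfold EE, Cf, Sf. simpl. ring. Qed.
Lemma EE_1 x1 x2 y1 y2 : (x1*y1 + x2*y2) * EE x1 x2 y1 y2 0 = EE x1 x2 y1 y2 1.
Proof. unfold EE. rewrite !Cf_S, !Sf_S. unfold Cf, Sf. simpl. ring. Qed.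
Lemma EE_SS x1 x2 y1 y2 k :
  2 * (x1*y1 + x2*y2) * EE x1 x2 y1 y2 (S k) =
  EE x1 x2 y1 y2 (S (S k)) + (x1*x1 + x2*x2) * (y1*y1 + y2*y2) * EE x1 x2 y1 y2 k.
Proof. unfold EE. rewrite ?Cf_S, ?Sf_S. rewrite ?Cf_S, ?Sf_S. ring. Qed.

Lemma shift_sum (rho pi : R) (E c : nat -> R) :
  rho * E O = E 1%nat -> (forall k, 2 * rho * E (S k) = E (S (S k)) + pi * E k) ->
  forall N, rho * ssum (fun m => c m * E m) (S N) =
   ssum (fun m => gam pi c m * E m) (S (S N)) - pi * c (S N) / 2 * E N - pi * c (S (S N)) / 2 * E (S N).
Proof.
  intros H0 HS N. induction N as [|N IH].
  - simpl. rewrite <- H0. field.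
  - change (ssum (fun m => c m * E m) (S (S N))) with (ssum (fun m => c m * E m) (S N) + c (S N) * E (S N)).
    change (ssum (fun m => gam pi c m * E m) (S (S (S N)))) with
      (ssum (fun m => gam pi c m * E m) (S (S N)) + gam pi c (S (S N)) * E (S (S N))).
    rewrite Rmult_plus_distr_l, IH. simpl gam.
    assert (H' : rho * E (S N) = (E (S (S N)) + pi * E N) / 2) by (pose proof (HS N); lra).
    replace (rho * (c (S N) * E (S N))) with (c (S N) * (rho * E (S N))) by ring.
    rewrite H'. field.
Qed.

Definition GG (x1 x2 s y1 y2 t : R) (n : nat) : R :=
  ssum (fun m => wgt n m * AA s t n m * EE x1 x2 y1 y2 m) (S n).

Lemma AA_van s t n m : (n < m)%nat -> AA s t n m = 0.
Proof. intro H. unfold AA. rewrite Qvan by exact H. ring. Qed.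

Lemma GG_step x1 x2 s y1 y2 t n :
  x1*x1 + x2*x2 = 1 - s*s -> y1*y1 + y2*y2 = 1 - t*t ->
  INR (S (S n)) * GG x1 x2 s y1 y2 t (S (S n)) =
  (2 * INR (S n) + 1) * (s*t + (x1*y1 + x2*y2)) * GG x1 x2 s y1 y2 t (S n)
  - INR (S n) * GG x1 x2 s y1 y2 t n.
Proof.
  intros Hx Hy.
  pose (E := EE x1 x2 y1 y2). pose (c := fun k => wgt (S n) k * AA s t (S n) k).
  pose (pi := (1-s*s)*(1-t*t)). pose (rho := x1*y1 + x2*y2).
  assert (Hsh := shift_sum rho pi E c (EE_1 x1 x2 y1 y2)
     (fun k => eq_trans (EE_SS x1 x2 y1 y2 k) ltac:(rewrite Hx, Hy; reflexivity)) (S n)).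
  assert (Hc : forall m, (S n < m)%nat -> c m = 0) by (intros m Hm; unfold c; rewrite AA_van by exact Hm; ring).
  rewrite (Hc (S (S n))), (Hc (S (S (S n)))) in Hsh by lia.
  assert (G1 : GG x1 x2 s y1 y2 t (S n) = ssum (fun m => c m * E m) (S (S n))) by reflexivity.
  assert (R1' : rho * GG x1 x2 s y1 y2 t (S n) = ssum (fun m => gam pi c m * E m) (S (S (S (S n))))).
  { rewrite G1, Hsh. replace (S (S (S (S n)))) with (S (S (S n)) + 1)%nat by lia.
    rewrite ssum_zero_ext. lra.
    intros m Hm. destruct m as [|[|k]]; try lia. simpl gam. rewrite !Hc by lia. field. }
  assert (G1' : GG x1 x2 s y1 y2 t (S n) = ssum (fun m => c m * E m) (S (S (S (S n))))).
  { rewrite G1. replace (S (S (S (S n)))) with (S (S n) + 2)%nat by lia.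
    rewrite ssum_zero_ext. reflexivity. intros m Hm. rewrite Hc by lia. ring. }
  assert (G2 : GG x1 x2 s y1 y2 t (S (S n)) =
     ssum (fun m => wgt (S (S n)) m * AA s t (S (S n)) m * E m) (S (S (S (S n))))).
  { unfold GG. replace (S (S (S (S n)))) with (S (S (S n)) + 1)%nat by lia.
    rewrite ssum_zero_ext. reflexivity. intros m Hm. rewrite AA_van by lia. ring. }
  assert (G0 : GG x1 x2 s y1 y2 t n =
     ssum (fun m => wgt n m * AA s t n m * E m) (S (S (S (S n))))).
  { unfold GG. replace (S (S (S (S n)))) with (S n + 3)%nat by lia.
    rewrite ssum_zero_ext. reflexivity. intros m Hm. rewrite AA_van by lia. ring. }
  fold rho.
  replace ((2 * INR (S n) + 1) * (s * t + rho) * GG x1 x2 s y1 y2 t (S n))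
    with ((2 * INR (S n) + 1) * (s * t * GG x1 x2 s y1 y2 t (S n) + rho * GG x1 x2 s y1 y2 t (S n))) by ring.
  rewrite R1'. rewrite G1' at 1. rewrite G2, G0.
  rewrite <- !ssum_scal, <- ssum_plus, <- ssum_scal, ssum_minus.
  apply ssum_ext. intros m _.
  pose proof (PerM s t n m) as P. cbv zeta in P. fold c pi in P.
  replace (INR (S (S n)) * (wgt (S (S n)) m * AA s t (S (S n)) m * E m))
    with ((INR (S (S n)) * (wgt (S (S n)) m * AA s t (S (S n)) m)) * E m) by ring.
  rewrite P. ring.
Qed.

Lemma GG_leg x1 x2 s y1 y2 t :
  x1*x1 + x2*x2 = 1 - s*s -> y1*y1 + y2*y2 = 1 - t*t ->
  forall n, GG x1 x2 s y1 y2 t n = legendre n (x1*y1 + x2*y2 + s*t).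
Proof.
  intros Hx Hy.
  assert (H : forall n, GG x1 x2 s y1 y2 t n = legendre n (x1*y1 + x2*y2 + s*t) /\
                        GG x1 x2 s y1 y2 t (S n) = legendre (S n) (x1*y1 + x2*y2 + s*t)).
  { induction n as [|n [IH1 IH2]].
    - split.
      + unfold GG. simpl ssum. unfold wgt, AA. rewrite EE_0. simpl. rewrite leg0. ring.
      + unfold GG. simpl ssum. unfold wgt, AA. rewrite <- (EE_1 x1 x2 y1 y2), EE_0.
        unfold lam. simpl. rewrite !leg1. field.
    - split. exact IH2.
      pose proof (GG_step x1 x2 s y1 y2 t n Hx Hy) as HS.
      pose proof (legSS n (x1*y1 + x2*y2 + s*t)) as HL.
      rewrite IH1, IH2 in HS. rewrite !S_INR in HS.
      apply Rmult_eq_reg_l with (INR n + 2). rewrite HL.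
      replace (INR n + 2) with (INR n + 1 + 1) by ring. rewrite HS. ring.
      pose proof (pos_INR n). lra. }
  intro n. apply H.
Qed.

Definition px1 (p : R3) : R := fst (fst p).
Definition px2 (p : R3) : R := snd (fst p).
Definition px3 (p : R3) : R := snd p.
Lemma dot3_E p q : dot3 p q = px1 p * px1 q + px2 p * px2 q + px3 p * px3 q.
Proof. destruct p as [[p1 p2] p3], q as [[q1 q2] q3]. reflexivity. Qed.
Lemma dot3_sym p q : dot3 p q = dot3 q p.
Proof. rewrite !dot3_E. ring. Qed.
Lemma sph_E p : on_sphere p -> px1 p * px1 p + px2 p * px2 p = 1 - px3 p * px3 p.
Proof. unfold on_sphere. rewrite dot3_E. intro H. lra. Qed.

Lemma wgt_nonneg n m : 0 <= wgt n m.
Proof.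
  destruct m; simpl. lra. unfold lam.
  apply Rmult_le_pos. lra. unfold Rdiv. apply Rmult_le_pos. apply pos_INR.
  left. apply Rinv_0_lt_compat. apply INR_fact_lt_0.
Qed.

Lemma leg_PSD n K (c : nat -> R) (pts : nat -> R3) :
  (forall i, (i < K)%nat -> on_sphere (pts i)) ->
  0 <= ssum (fun i => ssum (fun j => c i * c j * legendre n (dot3 (pts i) (pts j))) K) K.
Proof.
  intro Hs.
  pose (u := fun m i => Qf (px3 (pts i)) n m * Cf (px1 (pts i)) (px2 (pts i)) m).
  pose (v := fun m i => Qf (px3 (pts i)) n m * Sf (px1 (pts i)) (px2 (pts i)) m).
  rewrite (ssum_ext _ (fun i => ssum (fun j => c i * c j *
       ssum (fun m => wgt n m * (u m i * u m j + v m i * v m j)) (S n)) K)).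
  - apply PSD_gen. apply wgt_nonneg.
  - intros i Hi. apply ssum_ext. intros j Hj. f_equal.
    rewrite dot3_E.
    rewrite <- (GG_leg _ _ _ _ _ _ (sph_E _ (Hs i Hi)) (sph_E _ (Hs j Hj)) n).
    unfold GG. apply ssum_ext. intros m _. unfold AA, EE, u, v. ring.
Qed.

Lemma leg_bound n p q : on_sphere p -> on_sphere q -> Rabs (legendre n (dot3 p q)) <= 1.
Proof.
  intros Hp Hq.
  set (P := legendre n (dot3 p q)).
  pose (pts := fun i : nat => match i with O => p | _ => q end).
  pose (c := fun i : nat => match i with O => - P | _ => 1 end).
  assert (H := leg_PSD n 2 c pts ltac:(intros i Hi; destruct i; simpl; auto)).
  simpl in H. unfold c, pts in H.
  assert (E1 : dot3 p p = 1) by exact Hp. assert (E2 : dot3 q q = 1) by exact Hq.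
  rewrite E1, E2, (dot3_sym q p), !leg_one in H. fold P in H.
  apply Rabs_le. nra.
Qed.

Lemma sqrt_amgm u v : 0 <= u -> 0 <= v -> sqrt (u * v) <= (u + v) / 2.
Proof.
  intros Hu Hv. rewrite sqrt_mult by auto.
  pose proof (sqrt_sqrt u Hu). pose proof (sqrt_sqrt v Hv).
  pose proof (Rle_0_sqr (sqrt u - sqrt v)). unfold Rsqr in *. nra.
Qed.

Lemma sum_n_ssum f K : sum_n f K = ssum f (S K).
Proof.
  induction K as [|K IH]. rewrite sum_O. simpl ssum. symmetry. apply Rplus_0_l.
  rewrite sum_Sn, IH. reflexivity.
Qed.

Lemma Series_zero : Series (fun _ => 0) = 0.
Proof.
  rewrite (Series_ext _ (fun n => 0 * 0)) by (intros; ring).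
  rewrite Series_scal_l. ring.
Qed.

Lemma ssum_Series (F : nat -> nat -> R) K :
  (forall i, (i <= K)%nat -> ex_series (F i)) ->
  ssum (fun i => Series (F i)) (S K) = Series (fun n => ssum (fun i => F i n) (S K)) /\
  ex_series (fun n => ssum (fun i => F i n) (S K)).
Proof.
  induction K as [|K IH]; intro H.
  - simpl. split.
    + rewrite (Series_ext (fun n => 0 + F O n) (F O)) by (intros; ring). ring.
    + apply ex_series_ext with (F O). intros; simpl; ring. apply H; lia.
  - destruct (IH ltac:(intros; apply H; lia)) as [E1 E2].
    change (ssum (fun i => Series (F i)) (S (S K))) with (ssum (fun i => Series (F i)) (S K) + Series (F (S K))).
    change (fun n => ssum (fun i => F i n) (S (S K))) with (fun n => ssum (fun i => F i n) (S K) + F (S K) n).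
    split.
    + rewrite Series_plus; auto. rewrite E1. reflexivity.
    + apply (ex_series_plus (V := R_NormedModule)); auto.
Qed.

Theorem mainTheorem1 (b : nat -> R3 -> R)
  (hb_nonneg : forall n x, on_sphere x -> 0 <= b n x)
  (hb_sum : forall x, on_sphere x -> ex_series (fun n => b n x)) :
  forall (k : nat) (x : nat -> R3) (a : nat -> R), (1 <= k)%nat ->
    (forall i, (i < k)%nat -> on_sphere (x i)) ->
    0 <= sum_n (fun i => sum_n (fun j =>
            a i * a j * Ccov b (x i) (x j)) (k - 1)) (k - 1).
Proof.
  intros k x a Hk Hs.
  set (K := (k - 1)%nat).
  assert (HkK : k = S K) by (unfold K; lia).
  assert (Hs' : forall i, (i <= K)%nat -> on_sphere (x i)) by (intros; apply Hs; lia).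
  pose (d := fun i j n => sqrt (b n (x i) * b n (x j)) * legendre n (dot3 (x i) (x j))).
  assert (ex_d : forall i j, (i <= K)%nat -> (j <= K)%nat -> ex_series (d i j)).
  { intros i j Hi Hj.
    pose proof (Hs' i Hi) as Si. pose proof (Hs' j Hj) as Sj.
    apply (ex_series_le (K := R_AbsRing) (V := R_CompleteNormedModule)) with (fun n => (b n (x i) + b n (x j)) / 2).
    - intro n. change (norm (d i j n)) with (Rabs (d i j n)). unfold d.
      rewrite Rabs_mult, Rabs_right by (apply Rle_ge, sqrt_pos).
      pose proof (leg_bound n _ _ Si Sj).
      pose proof (sqrt_pos (b n (x i) * b n (x j))).
      pose proof (sqrt_amgm _ _ (hb_nonneg n _ Si) (hb_nonneg n _ Sj)). nra.
    - apply ex_series_ext with (fun n => scal (/2) (plus (b n (x i)) (b n (x j)))).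
      + intro n. change (/2 * (b n (x i) + b n (x j)) = (b n (x i) + b n (x j)) / 2). field.
      + apply (ex_series_scal_l (K := R_AbsRing) (V := R_NormedModule)). apply (ex_series_plus (V := R_NormedModule)); apply hb_sum; auto. }
  assert (ex_ad : forall i j, (i <= K)%nat -> (j <= K)%nat -> ex_series (fun n => a i * a j * d i j n)).
  { intros i j Hi Hj. apply ex_series_ext with (fun n => scal (a i * a j) (d i j n)).
    + intro n. reflexivity.
    + apply (ex_series_scal_l (K := R_AbsRing) (V := R_NormedModule)). auto. }
  assert (Inner : forall i, (i <= K)%nat ->
     ssum (fun j => a i * a j * Ccov b (x i) (x j)) (S K) =
       Series (fun n => ssum (fun j => a i * a j * d i j n) (S K)) /\
     ex_series (fun n => ssum (fun j => a i * a j * d i j n) (S K))).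
  { intros i Hi.
    destruct (ssum_Series (fun j n => a i * a j * d i j n) K ltac:(intros; apply ex_ad; auto)) as [E1 E2].
    split; auto. rewrite <- E1. apply ssum_ext. intros j Hj.
    unfold Ccov. rewrite Series_scal_l. reflexivity. }
  rewrite sum_n_ssum.
  rewrite (ssum_ext _ (fun i => Series (fun n => ssum (fun j => a i * a j * d i j n) (S K)))).
  2: { intros i Hi. rewrite sum_n_ssum. apply Inner. lia. }
  destruct (ssum_Series (fun i n => ssum (fun j => a i * a j * d i j n) (S K)) K
     ltac:(intros; apply Inner; auto)) as [E1 E2].
  rewrite E1. rewrite <- Series_zero. apply Series_le; [|exact E2].
  intro n. split; [lra|].
  rewrite (ssum_ext _ (fun i => ssum (fun j =>
       (a i * sqrt (b n (x i))) * (a j * sqrt (b n (x j))) * legendre n (dot3 (x i) (x j))) (S K))).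
  - apply leg_PSD. intros; apply Hs; lia.
  - intros i Hi. apply ssum_ext. intros j Hj. unfold d.
    rewrite sqrt_mult by (apply hb_nonneg; apply Hs; lia). ring.
Qed.
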